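(* Let $\mathcal{T}$ be a pattern set on an image $I$, let $I_0\subseteq I$ be a subimage, and let $\mathcal{M}=\{T\cap I_0\mid T\in\mathcal{T}\}$ (assumed to be a pattern set on $I_0$). Then for $L\in\{\mathrm{OR},\mathrm{SUM},\mathrm{OR2},\mathrm{SUM2}\}$, $L(\mathcal{M})\leqslant L(\mathcal{T})$.
   Context: Image: a finite set $I$ of pixel variables; a subimage is a subset of $I$. A pattern is a nonempty subset of the image; a pattern set $\mathcal{T}=\{T_k\}_{k=1}^m$ is a nonempty set of $m$ distinct patterns; computing it means computing simultaneously $y_k=\sum_{p\in T_k}p$ for a commutative semigroup operation. A circuit is a directed acyclic graph with one input node of fanin zero per pixel and $m$ output nodes of fanout zero; each node of nonzero fanin (gate) may have any positive number of incoming edges and computes the semigroup sum of its in-neighbours. Size = number of edges. A circuit computes $\mathcal{T}$ if for all input values each output $y_k$ equals $\sum_{p\in T_k}p$. $\mathrm{OR}(\mathcal{T})$ (resp. $\mathrm{SUM}(\mathcal{T})$) is the minimal size of a circuit computing $\mathcal{T}$ over $(\{0,1\},\vee)$ (resp. $(\mathbb{N},+)$). $\mathrm{OR2}(\mathcal{T})$ (resp. $\mathrm{SUM2}(\mathcal{T})$) is the minimal number of gates of a circuit computing $\mathcal{T}$ over $(\{0,1\},\vee)$ (resp. $(\mathbb{N},+)$) in which every node has fanin at most $2$. *)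

(* Defs.v *)
From Stdlib Require Import ClassicalEpsilon.
From mathcomp Require Import all_boot.

Set Implicit Arguments.
Unset Strict Implicit.
Unset Printing Implicit Defensive.

Section Circuits.
Variable X : finType. (* pixel variables; an image is a {set X} *)

Definition pattern_set (I : {set X}) (Ts : {set {set X}}) : Prop :=
  Ts != set0 /\ (forall T, T \in Ts -> T != set0 /\ T \subset I).

(* A circuit: the input nodes are the pixels; the gates are 'I_ng, numbered
   in a topological order of the DAG.  Gate j has incoming edges from the
   input nodes in [pin j] and from the gates in [gin j]; [out T] is the
   output node (a gate) for pattern T. *)
Record circuit := Circuit {
  ng  : nat;
  pin : 'I_ng -> {set X};
  gin : 'I_ng -> {set 'I_ng};
  out : {set X} -> 'I_ng
}.
Arguments pin c j : clear implicits.
Arguments gin c j : clear implicits.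
Arguments out c T : clear implicits.

Definition circuit_wf (I : {set X}) (Ts : {set {set X}}) (C : circuit) : Prop :=
  [/\ (forall j, pin C j \subset I),
      (forall j i, i \in gin C j -> (i < j)%N),
      (forall j, (pin C j != set0) || (gin C j != set0)),
      {in Ts &, injective (out C)}
    & (forall T j, T \in Ts -> out C T \notin gin C j)].

(* Value of gate j under input x, for a commutative monoid law op
   (fuel n; fuel [ng C] suffices by acyclicity). *)
Fixpoint gval (R : Type) (idx : R) (op : Monoid.com_law idx) (C : circuit)
    (x : X -> R) (n : nat) (j : 'I_(ng C)) : R :=
  match n with
  | 0 => idx
  | n'.+1 => op (\big[op/idx]_(p in pin C j) x p)
                (\big[op/idx]_(i in gin C j) @gval R idx op C x n' i)
  end.

Definition computes (R : Type) (idx : R) (op : Monoid.com_law idx)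
    (I : {set X}) (Ts : {set {set X}}) (C : circuit) : Prop :=
  circuit_wf I Ts C /\
  forall (x : X -> R) T, T \in Ts ->
    @gval R idx op C x (ng C) (out C T) = \big[op/idx]_(p in T) x p.

Definition csize (C : circuit) : nat :=
  \sum_(j < ng C) (#|pin C j| + #|gin C j|).

Definition fanin2 (C : circuit) : Prop :=
  forall j, (#|pin C j| + #|gin C j| <= 2)%N.

Inductive measure := OR | SUM | OR2 | SUM2.

Definition achievable (L : measure) (I : {set X}) (Ts : {set {set X}}) (k : nat) : Prop :=
  exists C : circuit,
    match L with
    | OR   => computes orb I Ts C /\ csize C = k
    | SUM  => computes addn I Ts C /\ csize C = k
    | OR2  => computes orb I Ts C /\ fanin2 C /\ ng C = k
    | SUM2 => computes addn I Ts C /\ fanin2 C /\ ng C = k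
    end.

(* The least natural number satisfying P (defaults to 0 if none). *)
Definition nat_min (P : nat -> Prop) : nat :=
  epsilon (inhabits 0%N) (fun n => P n /\ forall m, P m -> (n <= m)%N).

Definition cost (L : measure) (I : {set X}) (Ts : {set {set X}}) : nat :=
  nat_min (achievable L I Ts).

End Circuits.

(* Main.v *)
Require Import Defs.
From Stdlib Require Import ClassicalEpsilon Classical.
From mathcomp Require Import all_boot zify.

Set Implicit Arguments.
Unset Strict Implicit.
Unset Printing Implicit Defensive.

Lemma nat_min_spec (P : nat -> Prop) k : P k ->
  P (nat_min P) /\ forall m, P m -> (nat_min P <= m)%N.
Proof.
move=> Pk; rewrite /nat_min.
apply: (epsilon_spec (inhabits 0) (fun n => P n /\ forall m, P m -> (n <= m)%N)).
elim: k {-2}k (leqnn k) Pk => [|k IH] j.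
  rewrite leqn0 => /eqP -> P0; exists 0; split=> // m _; exact: leq0n.
move=> hj Pj.
case: (classic (exists i, (i < j)%N /\ P i)) => [[i [hi Pi]]|H].
  apply: (IH i) => //; lia.
exists j; split=> // m Pm; case: (leqP j m) => // hm.
by exfalso; apply: H; exists m.
Qed.

Section Gen.
Variable X : finType.
Variables (R : Type) (idx : R) (op : Monoid.com_law idx).

Lemma gval_stable (C : circuit X) x :
  (forall (j i : 'I_(ng C)), i \in gin j -> (i < j)%N) ->
  forall n m (j : 'I_(ng C)), (j < n)%N -> (j < m)%N ->
    gval op x n j = gval op x m j.
Proof.
move=> ac; elim=> [|n IH] [|m] j //= hn hm.
congr (op _ _); apply: eq_bigr => i /ac hi; apply: IH; lia.
Qed.

End Gen.

Lemma big_orP (T : finType) (A : {pred T}) (F : T -> bool) :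
  reflect (exists2 i, i \in A & F i) (\big[orb/false]_(i in A) F i).
Proof.
rewrite -big_filter big_has; apply: (iffP hasP) => [[i]|[i Ai Fi]].
  by rewrite mem_filter => /andP[Ai _] Fi; exists i.
by exists i => //; rewrite mem_filter Ai mem_index_enum.
Qed.

Section Restrict.
Variable X : finType.
Variables (I0 : {set X}) (p0 : X) (C : circuit X).
Hypothesis ac : forall (j i : 'I_(ng C)), i \in gin j -> (i < j)%N.

Definition aliveF n (j : 'I_(ng C)) := gval orb (fun p => p \in I0) n j.
Definition alive j := aliveF (ng C) j.
Definition aliveS := [set i | alive i].
Definition pinR j := if alive j then pin j :&: I0 else [set p0].
Definition ginR j := if alive j then gin j :&: aliveS else set0.
Definition rcirc (o : {set X} -> 'I_(ng C)) : circuit X :=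
  @Circuit X (ng C) pinR ginR o.

Lemma alive_fanin j : alive j -> (pin j :&: I0 != set0) || (ginR j != set0).
Proof.
move=> aj; rewrite /ginR aj.
move: aj; rewrite /alive /aliveF (gval_stable _ _ ac (ltn_ord j) (ltnSn j)) /=.
case/orP => [/big_orP [p Pp Ip]|/big_orP [i Gi Ai]].
  by apply/orP; left; apply/set0Pn; exists p; rewrite inE Pp Ip.
apply/orP; right; apply/set0Pn; exists i; rewrite !inE Gi /alive /aliveF.
by rewrite (gval_stable _ _ ac (ltn_ord i) (ac Gi)).
Qed.

Variables (R : Type) (idx : R) (op : Monoid.com_law idx).
Variable x : X -> R.
Definition x0 p := if p \in I0 then x p else idx.

Lemma dead_idx n j : aliveF n j = false -> gval op x0 n j = idx.
Proof.
elim: n j => [//|n IH] j /=; rewrite /aliveF /= => /norP [H1 H2].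
rewrite big1 ?big1 ?Monoid.mulm1 //.
  move=> i Gi; apply: IH; apply: contraNF H2 => Ai.
  by apply/big_orP; exists i.
move=> p Pp; rewrite /x0; case: ifP => // Ip.
by case/negP: H1; apply/big_orP; exists p.
Qed.

Lemma rcirc_val o n (j : 'I_(ng C)) : (j < n)%N -> alive j ->
  @gval X R idx op (rcirc o) x n j = gval op x0 n j.
Proof.
elim: n j => [//|n IH] j hj aj /=.
rewrite /pinR /ginR aj (@big_setID _ _ _ _ (pin j) I0) [X in _ = op _ X](@big_setID _ _ _ _ (gin j) aliveS).
rewrite [X in op (op _ X) _]big1 ?Monoid.mulm1; last first.
  by move=> p; rewrite !inE /x0 => /andP [/negPf -> _].
rewrite [X in op _ (op _ X)]big1 ?Monoid.mulm1; last first.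
  move=> i; rewrite !inE => /andP [Ai Gi]; apply: dead_idx.
  move: Ai; rewrite /alive /aliveF (gval_stable _ _ ac (ltn_ord i) (_ : (i < n)%N)).
    by move/negPf.
  by have := ac Gi; lia.
congr (op _ _); apply: eq_bigr.
  by move=> p; rewrite !inE /x0 => /andP [_ ->].
move=> i; rewrite !inE => /andP [Gi Ai]; apply: IH => //.
by have := ac Gi; lia.
Qed.

End Restrict.

Section Restrict2.
Variable X : finType.
Variables (R : Type) (idx : R) (op : Monoid.com_law idx).
Variables (I I0 : {set X}) (Ts : {set {set X}}) (C : circuit X) (p0 : X).
Hypothesis HC : computes op I Ts C.
Hypothesis Hp0 : p0 \in I0.
Hypothesis Hxn : exists xn, forall U : {set X}, U != set0 ->
  \big[op/idx]_(p in U) xn p <> idx.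
Hypothesis HM : forall T, T \in Ts -> T :&: I0 != set0.

Definition oR S := if [pick T in Ts | T :&: I0 == S] is Some T then out C T
  else out C S.

Lemma oR_spec U : U \in [set T :&: I0 | T in Ts] ->
  exists T, [/\ T \in Ts, T :&: I0 = U & oR U = out C T].
Proof.
move=> /imsetP [T0 HT0 ->]; rewrite /oR; case: pickP => [T /andP [HT /eqP E]|H].
  by exists T; split.
by have := H T0; rewrite HT0 eqxx.
Qed.

Lemma big_x0 (x : X -> R) (T : {set X}) : \big[op/idx]_(p in T) @x0 X I0 R idx x p = \big[op/idx]_(p in T :&: I0) x p.
Proof.
rewrite (@big_setID _ _ _ _ T I0) [X in op _ X]big1 ?Monoid.mulm1.
  by apply: eq_bigr => p; rewrite inE /x0 => /andP [_ ->].
by move=> p; rewrite !inE /x0 => /andP [/negPf -> _].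
Qed.

Let ac : forall (j i : 'I_(ng C)), i \in gin j -> (i < j)%N.
Proof. by case: HC => [[]]. Qed.

Lemma out_alive T : T \in Ts -> alive I0 (out C T).
Proof.
move=> HT; apply/negP => /negP /negbTE D.
case: Hxn => xn Hn; have := Hn _ (HM HT); rewrite -big_x0.
case: HC => _ <- //; by rewrite (dead_idx op xn D).
Qed.

Lemma rcirc_computes : computes op I0 [set T :&: I0 | T in Ts] (rcirc I0 p0 oR).
Proof.
case: (HC) => [[Hpin Hac Hfan Hinj Hout] Hval].
split; first split.
- move=> j /=; rewrite /pinR; case: ifP => _; first exact: subsetIr.
  by rewrite sub1set.
- move=> j i /=; rewrite /ginR; case: ifP => _; last by rewrite inE.
  by rewrite inE => /andP [/Hac].
- move=> j /=; case: (boolP (@alive X I0 C j)) => aj.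
    by have := alive_fanin ac aj; rewrite /pinR aj.
  by rewrite /pinR (negbTE aj); apply/orP; left; apply/set0Pn; exists p0; rewrite inE.
- move=> U V HU HV /=; case: (oR_spec HU) => [T [HT <- ->]].
  by case: (oR_spec HV) => [T' [HT' <- ->]] /Hinj ->.
- move=> U j HU /=; case: (oR_spec HU) => [T [HT _ ->]]; rewrite /ginR.
  case: ifP => _; last by rewrite inE.
  by rewrite inE negb_and Hout.
move=> x U HU; case: (oR_spec HU) => [T [HT <- E]].
rewrite /= E (rcirc_val p0 ac) ?out_alive // -big_x0; first exact: Hval.
Qed.

Lemma rcirc_csize : (csize (rcirc I0 p0 oR) <= csize C)%N.
Proof.
case: (HC) => [[Hpin Hac Hfan Hinj Hout] Hval].
apply: leq_sum => j _ /=; rewrite /pinR /ginR; case: ifP => _.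
  by apply: leq_add; apply: subset_leq_card; apply: subsetIl.
rewrite cards1 cards0; have := Hfan j; rewrite -!card_gt0; case/orP => H; [exact: leq_trans H (leq_addr _ _)|exact: leq_trans H (leq_addl _ _)].
Qed.

Lemma rcirc_fanin2 : fanin2 C -> fanin2 (rcirc I0 p0 oR).
Proof.
move=> F j; have := F j; rewrite /= /pinR /ginR; case: ifP => _.
  move=> H; apply: leq_trans H; apply: leq_add; apply: subset_leq_card; apply: subsetIl.
by rewrite cards1 cards0.
Qed.

End Restrict2.

Section Construct.
Variable X : finType.
Variables (I : {set X}) (p0 : X).
Hypothesis Hp0 : p0 \in I.

Definition xs := enum X.
Definition ss := enum {set X}.
Definition NN := #|X|.
Definition mm := #|{set X}|.
Definition ngK := (mm * NN).+1.
Definition Sof g := nth set0 ss (g %/ NN).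
Definition bof g := g %% NN.
Definition cont S b := [set x in S :&: I | (index x xs <= b)%N].
Definition pset S b := [set x in S :&: I | index x xs == b].
Definition pinK (j : 'I_ngK) : {set X} :=
  if cont (Sof j) (bof j) == set0 then [set p0] else pset (Sof j) (bof j).
Definition ginK (j : 'I_ngK) : {set 'I_ngK} :=
  [set i : 'I_ngK | [&& (0 < bof j)%N, cont (Sof j) (bof j).-1 != set0 & val i == j.-1]].
Definition outK (S : {set X}) : 'I_ngK := inord (index S ss * NN + NN.-1).
Definition CK := @Circuit X ngK pinK ginK outK.

Lemma NN_gt0 : (0 < NN)%N.
Proof. by apply/card_gt0P; exists p0. Qed.

Lemma index_lt x : (index x xs < NN)%N.
Proof. by rewrite /NN cardE index_mem mem_enum. Qed.

Lemma gate_ab a b : (b < NN)%N -> Sof (a * NN + b) = nth set0 ss a /\ bof (a * NN + b) = b.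
Proof.
move=> hb; rewrite /Sof /bof divnMDl ?NN_gt0 // divn_small // addn0; split=> //.
by rewrite modnMDl modn_small.
Qed.

Lemma cont_S S b : cont S b.+1 :&: cont S b = cont S b /\
  cont S b.+1 :\: cont S b = pset S b.+1.
Proof.
split; apply/setP => x; rewrite !inE; case: (x \in S); case: (x \in I) => //=; lia.
Qed.

Variables (R : Type) (idx : R) (op : Monoid.com_law idx).

Lemma valK x a b : (b < NN)%N -> (a * NN + b < ngK)%N -> forall n, (b < n)%N ->
  cont (nth set0 ss a) b != set0 ->
  @gval X R idx op CK x n (inord (a * NN + b)) =
    \big[op/idx]_(p in cont (nth set0 ss a) b) x p.
Proof.
elim: b => [|b IH] hb hg [|n] // hn hc /=.
  rewrite /pinK /ginK inordK //; case: (gate_ab a hb) => -> ->.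
  rewrite (negbTE hc) [X in op _ X]big1 ?Monoid.mulm1; last by move=> i; rewrite inE.
  by apply: eq_bigl => p; rewrite !inE leqn0.
rewrite /pinK /ginK inordK //; case: (gate_ab a hb) => -> ->.
rewrite (negbTE hc) /=.
set S := nth set0 ss a.
case: (cont_S S b) => E1 E2.
rewrite (@big_setID _ _ _ _ (cont S b.+1) (cont S b)) E1 E2 Monoid.mulmC.
case: (boolP (cont S b == set0)) => [/eqP E|hc'].
  rewrite E big_set0 big1 // => i; by rewrite inE.
congr (op _ _).
have hb' : (b < NN)%N by lia.
have hg' : (a * NN + b < ngK)%N by lia.
rewrite (eq_bigl (fun i : 'I_ngK => i == inord (a * NN + b))).
  by rewrite big_pred1_eq IH.
move=> i; rewrite !inE /= -val_eqE /= inordK //; congr (_ == _); lia.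
Qed.

Lemma index_ss (S : {set X}) : (index S ss < mm)%N.
Proof. by rewrite /mm cardE index_mem mem_enum. Qed.

Lemma outK_val S : val (outK S) = index S ss * NN + NN.-1.
Proof. rewrite /outK /= inordK //; have := index_ss S; have := NN_gt0; rewrite /ngK; nia. Qed.

Lemma cont0 S : cont S 0 = pset S 0.
Proof. by apply/setP => x; rewrite !inE leqn0. Qed.

Lemma CK_wf (Ts : {set {set X}}) : pattern_set I Ts -> circuit_wf I Ts CK.
Proof.
move=> [_ HTs]; split.
- move=> j /=; rewrite /pinK; case: ifP => _; first by rewrite sub1set.
  by apply/subsetP => x; rewrite !inE => /andP [/andP [_ ->]].
- move=> j i /=; rewrite inE => /and3P [h1 _ /eqP ->].
  have : (0 < j)%N by case: (posnP j) => [E|//]; move: h1; rewrite /bof E mod0n.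
  by move=> h; rewrite ltn_predL.
- move=> j /=; rewrite /pinK /ginK.
  case: (boolP (cont (Sof j) (bof j) == set0)) => hc /=.
    by apply/orP; left; apply/set0Pn; exists p0; rewrite inE.
  move: hc; set S := Sof j; case E: (bof j) => [|b] hc.
    by rewrite -cont0 hc.
  case: (boolP (pset S b.+1 == set0)) => [/eqP hp|h]; last by apply/orP; left.
  apply/orP; right; apply/set0Pn; exists (inord j.-1).
  have hb : cont S b != set0.
    apply: contraNN hc => /eqP h0.
    case: (cont_S S b) => _ E2; rewrite -(setID (cont S b.+1) (cont S b)) E2 hp.
    by rewrite h0 setI0 setU0.
  rewrite inE hb /= inordK //; exact: leq_ltn_trans (leq_pred _) (ltn_ord j).
- move=> S S' HS HS' /= /(congr1 val); rewrite !outK_val => h.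
  have h2 : index S ss = index S' ss.
    by apply/eqP; rewrite -(eqn_pmul2r NN_gt0) -(eqn_add2r NN.-1) h.
  by apply: (@index_inj _ set0 _ S S' _ _ h2); rewrite mem_enum.
- move=> T j HT /=; rewrite inE; apply/negP => /and3P [h1 _ /eqP h3].
  move: h3 h1; rewrite outK_val /bof => h3 h1.
  have hj : (0 < j)%N by case: (posnP j) => [E|//]; move: h1; rewrite E mod0n.
  have Ej : nat_of_ord j = (index T ss).+1 * NN.
    rewrite mulSn; have := NN_gt0; move: h3 hj; case: (nat_of_ord j) => [|v] //=; move=> <- _ h; rewrite -addnS prednK // addnC //.
  by move: h1; rewrite Ej modnMl.
Qed.

Lemma CK_computes (Ts : {set {set X}}) : pattern_set I Ts -> computes op I Ts CK.
Proof.
move=> HP; split; first exact: CK_wf.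
move=> x T HT; case: HP => _ /(_ T HT) [nz sub].
have hc : cont T NN.-1 = T.
  apply/setP => y; rewrite !inE; case: (boolP (y \in T)) => //= yT.
  rewrite (subsetP sub y yT) /=; have := index_lt y; lia.
have := NN_gt0; have := index_ss T => h1 h2.
have hb : (NN.-1 < NN)%N by lia.
have h3 : ((index T ss).+1 * NN <= mm * NN)%N by rewrite leq_mul2r h1 orbT.
have hg : (index T ss * NN + NN.-1 < ngK)%N by move: h3; rewrite /ngK mulSn; lia.
have hn : (NN.-1 < ngK)%N by move: hg; rewrite /ngK; lia.
have := valK x hb hg hn; rewrite nth_index ?mem_enum // hc => H.
exact: H nz.
Qed.

Lemma CK_fanin2 : fanin2 CK.
Proof.
move=> j /=; rewrite /pinK /ginK.
have h1 : (#|[set i : 'I_ngK | [&& (0 < bof j)%N, cont (Sof j) (bof j).-1 != set0 & val i == j.-1]]| <= 1)%N.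
  apply/card_le1_eqP => u v; rewrite !inE => /and3P [_ _ /eqP hu] /and3P [_ _ /eqP hv].
  by apply: val_inj; rewrite hu hv.
case: ifP => _; first by rewrite cards1; exact: (leq_add (leqnn 1) h1).
have h2 : (#|pset (Sof j) (bof j)| <= 1)%N.
  apply/card_le1_eqP => u v; rewrite !inE => /andP [_ /eqP hu] /andP [_ /eqP hv].
  by apply: (@index_inj _ p0 xs); rewrite ?mem_enum // hu hv.
exact: (leq_add h2 h1).
Qed.

End Construct.

Lemma pat_pt (X : finType) (I : {set X}) Ts : pattern_set I Ts -> exists2 p, p \in I &
  forall T, T \in Ts -> T != set0.
Proof.
move=> [/set0Pn [T HT] H]; case: (H T HT) => /set0Pn [p Hp] sub.
by exists p; [exact: (subsetP sub) | move=> U /H []].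
Qed.

Lemma achievable_ex (X : finType) L (I : {set X}) Ts : pattern_set I Ts ->
  exists k, achievable L I Ts k.
Proof.
move=> HP; case: (pat_pt HP) => p0 Hp0 _.
case: L.
- by exists (csize (CK I p0)), (CK I p0); split=> //; apply: CK_computes.
- by exists (csize (CK I p0)), (CK I p0); split=> //; apply: CK_computes.
- exists (ng (CK I p0)), (CK I p0); split; first exact: CK_computes.
  by split=> //; apply: CK_fanin2.
- exists (ng (CK I p0)), (CK I p0); split; first exact: CK_computes.
  by split=> //; apply: CK_fanin2.
Qed.

Lemma xn_orb (X : finType) : exists xn : X -> bool, forall U : {set X}, U != set0 ->
  \big[orb/false]_(p in U) xn p <> false.
Proof.
exists (fun _ => true) => U /set0Pn [p Hp].
by rewrite (bigD1 p).
Qed.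

Lemma xn_addn (X : finType) : exists xn : X -> nat, forall U : {set X}, U != set0 ->
  \big[addn/0]_(p in U) xn p <> 0.
Proof.
exists (fun _ => 1) => U /set0Pn [p Hp].
by rewrite (bigD1 p).
Qed.

Theorem proposition4 (X : finType) (I I0 : {set X}) (Ts : {set {set X}}) :
  pattern_set I Ts -> I0 \subset I ->
  pattern_set I0 [set T :&: I0 | T in Ts] ->
  forall L : measure,
    (cost L I0 [set T :&: I0 | T in Ts] <= cost L I Ts)%N.
Proof.
move=> HP sub HPM L.
case: (pat_pt HPM) => p0 Hp0 HM0.
have HM : forall T, T \in Ts -> T :&: I0 != set0.
  by move=> T HT; apply: HM0; apply: imset_f.
have [k Hk] := achievable_ex L HP.
have [Hc _] := nat_min_spec Hk.
rewrite /cost; case: L Hk Hc => _ [C].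
- move=> [HC Hs].
  have A : achievable OR I0 [set T :&: I0 | T in Ts] (csize (rcirc I0 p0 (oR I0 Ts C))).
    by exists (rcirc I0 p0 (oR I0 Ts C)); split=> //; apply: (rcirc_computes HC) => //; apply: xn_orb.
  have [_ Hm] := nat_min_spec A; apply: leq_trans (Hm _ A) _.
  by rewrite -Hs; apply: (rcirc_csize I0 p0 HC).
- move=> [HC Hs].
  have A : achievable SUM I0 [set T :&: I0 | T in Ts] (csize (rcirc I0 p0 (oR I0 Ts C))).
    by exists (rcirc I0 p0 (oR I0 Ts C)); split=> //; apply: (rcirc_computes HC) => //; apply: xn_addn.
  have [_ Hm] := nat_min_spec A; apply: leq_trans (Hm _ A) _.
  by rewrite -Hs; apply: (rcirc_csize I0 p0 HC).
- move=> [HC [F Hs]].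
  have A : achievable OR2 I0 [set T :&: I0 | T in Ts] (ng C).
    exists (rcirc I0 p0 (oR I0 Ts C)); split; first by apply: (rcirc_computes HC) => //; apply: xn_orb.
    by split=> //; apply: rcirc_fanin2.
  have [_ Hm] := nat_min_spec A; by rewrite -Hs; apply: Hm.
- move=> [HC [F Hs]].
  have A : achievable SUM2 I0 [set T :&: I0 | T in Ts] (ng C).
    exists (rcirc I0 p0 (oR I0 Ts C)); split; first by apply: (rcirc_computes HC) => //; apply: xn_addn.
    by split=> //; apply: rcirc_fanin2.
  have [_ Hm] := nat_min_spec A; by rewrite -Hs; apply: Hm.
Qed.
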